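(* Let $K,F,g$ be positive integers with $K\ge g\ge 2$. Let $\mathbf{P}=[p_{j,k}]$ be an $F\times K$ array whose entries are either a special symbol $*$ or nonnegative integers, satisfying: (C2') each integer occurring in $\mathbf{P}$ occurs exactly $g$ times; (C3) for any two distinct entries with $p_{j_1,k_1}=p_{j_2,k_2}=s$ an integer, we have $j_1\neq j_2$, $k_1\neq k_2$, and $p_{j_1,k_2}=p_{j_2,k_1}=*$; (C4) each row of $\mathbf{P}$ contains exactly $g-1$ symbols $*$. Then $F\ge\binom{K}{g-1}$. *)

(* Defs.v *)
From mathcomp Require Import all_boot.
Set Implicit Arguments. Unset Strict Implicit. Unset Printing Implicit Defensive.

(* An F x K array whose entries are either the symbol * (encoded as None)
   or a nonnegative integer s (encoded as Some s). Rows j : 'I_F, columns k : 'I_K. *)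
Definition array (F K : nat) := 'I_F -> 'I_K -> option nat.

Definition C2' F K (g : nat) (P : array F K) : Prop :=
  forall s : nat, (exists j k, P j k = Some s) ->
    #|[set jk : 'I_F * 'I_K | P jk.1 jk.2 == Some s]| = g.

Definition C3 F K (P : array F K) : Prop :=
  forall (j1 j2 : 'I_F) (k1 k2 : 'I_K) (s : nat),
    (j1, k1) <> (j2, k2) -> P j1 k1 = Some s -> P j2 k2 = Some s ->
    [/\ j1 <> j2, k1 <> k2, P j1 k2 = None & P j2 k1 = None].

Definition C4 F K (g : nat) (P : array F K) : Prop :=
  forall j : 'I_F, #|[set k : 'I_K | P j k == None]| = g - 1.

(* Main.v *)
Require Import Defs.
From mathcomp Require Import all_boot.
From mathcomp Require Import zify.
Set Implicit Arguments. Unset Strict Implicit.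

Definition St F K (P : array F K) (j : 'I_F) : {set 'I_K} := [set k | P j k == None].

Lemma swap (K F g : nat) (P : array F K) :
  2 <= g -> C2' g P -> C3 P -> C4 g P ->
  forall j k t, k \notin St P j -> t \in St P j ->
  exists j2, St P j2 = k |: (St P j :\ t).
Proof.
move=> g2 HC2 HC3 HC4 j k t kS tS.
case Ejk: (P j k) => [s|]; last by move: kS; rewrite inE Ejk.
set O := [set jk : 'I_F * 'I_K | P jk.1 jk.2 == Some s].
have cO : #|O| = g by apply: HC2; exists j, k.
have jkO : (j,k) \in O by rewrite inE Ejk.
set O' := O :\ (j,k).
have cO' : #|O'| = g.-1.
  have h := cardsD1 (j,k) O; rewrite jkO cO in h; by rewrite h add1n.
have Hsub : [set x.2 | x in O'] \subset St P j.
  apply/subsetP => x /imsetP[[j3 k3] H ->]; move: H; rewrite !inE => /andP[ne /eqP e].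
  have [_ _ h _] := HC3 j j3 k k3 s (fun E => ltac:(by move: ne; rewrite -E eqxx)) Ejk e.
  by rewrite /= h.
have Hinj : {in O' &, injective (fun x : 'I_F * 'I_K => x.2)}.
  move=> [j3 k3] [j4 k4]; rewrite !inE => /andP[_ /eqP e3] /andP[_ /eqP e4] /= Ek.
  case: (eqVneq (j3,k3) (j4,k4)) => // /eqP ne.
  by have [_ h _ _] := HC3 j3 j4 k3 k4 s ne e3 e4.
have Himg : [set x.2 | x in O'] = St P j.
  apply/eqP; rewrite eqEcard Hsub /= card_in_imset // cO' (HC4 j).
  by rewrite subn1.
have /imsetP[[j2 t'] H2 /= Et] : t \in [set x.2 | x in O'] by rewrite Himg.
subst t'.
have := H2; rewrite !inE => /andP[ne2 /eqP e2].
exists j2; apply/eqP; rewrite eq_sym eqEcard; apply/andP; split.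
- apply/subsetP => x; rewrite !inE => /orP[/eqP->|/andP[xt xS]].
  + have [_ _ _ h] := HC3 j j2 k t s (fun E => ltac:(by move: ne2; rewrite -E eqxx)) Ejk e2.
    by rewrite h.
  + have /imsetP[[j3 x'] H3 /= Ex] : x \in [set x.2 | x in O'] by rewrite Himg inE.
    subst x'. move: H3; rewrite !inE => /andP[_ /eqP e3].
    have [_ _ h _] := HC3 j2 j3 t x s
      (fun E => ltac:(by case: E => _ E; move: xt; rewrite E eqxx)) e2 e3.
    by rewrite h.
- rewrite (HC4 j2) cardsU1 in_setD1 (negbTE kS) andbF /=.
  have := cardsD1 t (St P j); rewrite tS (HC4 j) /=. lia.
Qed.

Theorem lemma2 (K F g : nat) (P : array F K) :
  0 < F -> 2 <= g -> g <= K ->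
  C2' g P -> C3 P -> C4 g P ->
  'C(K, g.-1) <= F.
Proof.
move=> F0 g2 gK HC2 HC3 HC4.
have reach : forall n j (T : {set 'I_K}), #|T| = g - 1 -> #|T :\: St P j| <= n ->
    exists j', St P j' = T.
  elim=> [|n IH] j T cT.
    rewrite leqn0 cards_eq0 setD_eq0 => sub; exists j.
    by apply/eqP; rewrite eq_sym eqEcard sub (HC4 j) cT leqnn.
  move=> h; case: (leqP #|T :\: St P j| n) => [|lt]; first exact: IH.
  have /set0Pn[k kTS] : T :\: St P j != set0.
    by rewrite -card_gt0 (leq_ltn_trans _ lt).
  have cD : #|St P j :\: T| = #|T :\: St P j|.
    have := cardsID T (St P j); have := cardsID (St P j) T.
    rewrite setIC (HC4 j) cT; lia.
  have /set0Pn[t tST] : St P j :\: T != set0.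
    by rewrite -card_gt0 cD (leq_ltn_trans _ lt).
  move: kTS tST; rewrite !in_setD => /andP[kS kT] /andP[tT tS].
  have [j2 E] := swap g2 HC2 HC3 HC4 (kS : k \notin St P j) (tS : t \in St P j).
  apply: (IH j2 T cT); rewrite E.
  apply: leq_trans (subset_leq_card (_ : _ \subset (T :\: St P j) :\ k)) _.
    apply/subsetP => x; rewrite !inE negb_or negb_and negbK.
    move=> /andP[/andP[xk /orP[/eqP xt|xS]] xT].
      by move: tT; rewrite -xt xT.
    by rewrite xk xS xT.
  have := cardsD1 k (T :\: St P j); rewrite in_setD kS kT /= => e; by move: h; rewrite e add1n ltnS.
set D := [set A : {set 'I_K} | #|A| == g.-1].
have -> : 'C(K, g.-1) = #|D| by rewrite card_draws card_ord.
apply: leq_trans (subset_leq_card (_ : D \subset [set St P j | j in 'I_F])) _.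
  apply/subsetP => A; rewrite inE => /eqP cA.
  have [j' <-] := reach K (Ordinal F0) A (ltac:(by rewrite subn1))
     (leq_trans (max_card _) (eq_leq (card_ord K))).
  by apply: imset_f.
by apply: leq_trans (leq_imset_card _ _) _; rewrite card_ord.
Qed.
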